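(* Let $L(\mathbf x,\dot{\mathbf x},t)=-mc^2\sqrt{1-\dot{\mathbf x}^2/c^2}-q\big[A^0(t,\mathbf x)-\mathbf A(t,\mathbf x)\cdot\dot{\mathbf x}/c\big]$ and let $\mathbf Q(\mathbf x,\dot{\mathbf x},t)$ be an additional force. Define $$\hat{\mathcal L}(\hat{\mathbf x},\hat{\mathbf x}',\xi):=(1+\hat z')\,L\Big(\hat{\mathbf x},\frac{c\hat{\mathbf x}'}{1+\hat z'},\frac{\xi+\hat z}{c}\Big),$$ $$\hat{\mathbf Q}^{\perp}(\hat{\mathbf x},\hat{\mathbf x}',\xi):=(1+\hat z')\,\mathbf Q^{\perp}\Big(\hat{\mathbf x},\frac{c\hat{\mathbf x}'}{1+\hat z'},\frac{\xi+\hat z}{c}\Big),\qquad \hat Q^z(\hat{\mathbf x},\hat{\mathbf x}',\xi):=\Big[Q^z-\hat{\mathbf x}^{\perp}{}'\cdot\mathbf Q^{\perp}\Big]\Big(\hat{\mathbf x},\frac{c\hat{\mathbf x}'}{1+\hat z'},\frac{\xi+\hat z}{c}\Big).$$ Then a motion $\mathbf x(t)$ with $|\dot{\mathbf x}|<c$ satisfies the Lagrange equations $$\frac{d}{dt}\frac{\partial L}{\partial\dot{\mathbf x}}-\frac{\partial L}{\partial\mathbf x}=\mathbf Q$$ if and only if its reparametrization $\hat{\mathbf x}(\xi)$ by $\xi=ct-z$ satisfies $$\frac{d}{d\xi}\frac{\partial\hat{\mathcal L}}{\partial\hat{\mathbf x}'}-\frac{\partial\hat{\mathcal L}}{\partial\hat{\mathbf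 x}}=\hat{\mathbf Q}.$$
   Context: A particle of rest mass $m>0$ and charge $q$ in an external electromagnetic potential $(A^0,\mathbf A)(t,\mathbf x)$. Coordinates $\mathbf x=(x,y,z)$, $\perp$ denotes $(x,y)$-components, dot is $d/dt$. Since $|\dot{\mathbf x}|<c$, $\xi(t)=ct-z(t)$ is strictly increasing; $\hat{\mathbf x}(\xi)$ is defined by $\hat{\mathbf x}(\xi(t))=\mathbf x(t)$, and prime denotes $d/d\xi$ (so that $1+\hat z'>0$ and $d/d\xi=(1+\hat z')\,d/d(ct)$). *)

(* Defs.v *)
From Stdlib Require Import Reals.
From Coquelicot Require Import Coquelicot.
Open Scope R_scope.

Inductive axis := ax | ay | az.
Definition V3 : Type := (R * R * R)%type.
Definition mk3 (a b d : R) : V3 := (a, b, d).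
Definition vc (v : V3) (i : axis) : R :=
  match i with ax => fst (fst v) | ay => snd (fst v) | az => snd v end.
Definition upd (v : V3) (i : axis) (s : R) : V3 :=
  match i with
  | ax => mk3 s (vc v ay) (vc v az)
  | ay => mk3 (vc v ax) s (vc v az)
  | az => mk3 (vc v ax) (vc v ay) s
  end.
Definition dot (v w : V3) : R :=
  vc v ax * vc w ax + vc v ay * vc w ay + vc v az * vc w az.
Definition scal (k : R) (v : V3) : V3 :=
  mk3 (k * vc v ax) (k * vc v ay) (k * vc v az).

Definition vel (p : R -> V3) (t : R) : V3 :=
  mk3 (Derive (fun s => vc (p s) ax) t)
      (Derive (fun s => vc (p s) ay) t)
      (Derive (fun s => vc (p s) az) t).

(* Lagrangians L(X, V, t) and generalized forces Q(X, V, t). *)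
Definition Lag : Type := V3 -> V3 -> R -> R.
Definition Force : Type := V3 -> V3 -> R -> V3.

Definition pdV (L : Lag) (X V : V3) (t : R) (i : axis) : R :=
  Derive (fun s => L X (upd V i s) t) (vc V i).
Definition pdX (L : Lag) (X V : V3) (t : R) (i : axis) : R :=
  Derive (fun s => L (upd X i s) V t) (vc X i).

Definition EL (L : Lag) (Q : Force) (p : R -> V3) (t : R) : Prop :=
  forall i : axis,
    Derive (fun s => pdV L (p s) (vel p s) s i) t - pdX L (p t) (vel p t) t i
    = vc (Q (p t) (vel p t) t) i.

Definition Lrel (m c q : R) (A0 : R -> V3 -> R) (A : R -> V3 -> V3) : Lag :=
  fun X V t => - m * c ^ 2 * sqrt (1 - dot V V / c ^ 2)
               - q * (A0 t X - dot (A t X) V / c).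

Definition Lhat (c : R) (L : Lag) : Lag :=
  fun Xh Vh xi =>
    (1 + vc Vh az) * L Xh (scal (c / (1 + vc Vh az)) Vh) ((xi + vc Xh az) / c).

Definition Qhat (c : R) (Q : Force) : Force :=
  fun Xh Vh xi =>
    let F := Q Xh (scal (c / (1 + vc Vh az)) Vh) ((xi + vc Xh az) / c) in
    mk3 ((1 + vc Vh az) * vc F ax)
        ((1 + vc Vh az) * vc F ay)
        (vc F az - (vc Vh ax * vc F ax + vc Vh ay * vc F ay)).

Definition pd_t (f : R -> V3 -> R) (t : R) (X : V3) : R :=
  Derive (fun s => f s X) t.
Definition pd_x (f : R -> V3 -> R) (t : R) (X : V3) (i : axis) : R :=
  Derive (fun s => f t (upd X i s)) (vc X i).
Definition IsC1 (f : R -> V3 -> R) : Prop :=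
  forall (t : R) (X : V3),
    ex_derive (fun s => f s X) t /\
    (forall i, ex_derive (fun s => f t (upd X i s)) (vc X i)) /\
    continuous (fun p : R * V3 => pd_t f (fst p) (snd p)) (t, X) /\
    (forall i, continuous (fun p : R * V3 => pd_x f (fst p) (snd p) i) (t, X)).

Definition in_I (a b : Rbar) (t : R) : Prop := Rbar_lt a t /\ Rbar_lt t b.

(* Main.v *)
Require Import Defs.
From Stdlib Require Import Reals Lra Ranalysis5.
From Coquelicot Require Import Coquelicot.
Open Scope R_scope.

Lemma step_lemma (h dh : R -> R -> R) (al : R -> R) (s0 al' L : R) :
  (forall s r, is_derive (h s) r (dh s r)) ->
  (forall eps, 0 < eps -> exists d, 0 < d /\ forall s r,
      Rabs (s - s0) < d -> Rabs (r - al s0) < d -> Rabs (dh s r - L) < eps) ->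
  is_derive al s0 al' ->
  forall eps, 0 < eps -> exists d, 0 < d /\ forall s, Rabs (s - s0) < d ->
    Rabs (h s (al s) - h s (al s0) - L * al' * (s - s0)) <= eps * Rabs (s - s0).
Proof.
  intros Hd Hc Ha eps Heps.
  set (e1 := eps / (2 * (Rabs al' + 1))).
  set (e2 := Rmin 1 (eps / (2 * (Rabs L + 1)))).
  assert (He1 : 0 < e1) by (unfold e1; apply Rdiv_lt_0_compat; [lra| pose proof (Rabs_pos al'); lra]).
  assert (He2 : 0 < e2).
  { unfold e2; apply Rmin_glb_lt; [lra|]. apply Rdiv_lt_0_compat; [lra| pose proof (Rabs_pos L); lra]. }
  destruct (Hc e1 He1) as [d1 [Hd1 Hc1]].
  apply is_derive_Reals in Ha.
  destruct (Ha e2 He2) as [d2 Hd2].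
  set (d := Rmin (Rmin d1 d2) (d1 / (Rabs al' + 1))).
  assert (Hdp : 0 < d).
  { unfold d. apply Rmin_glb_lt; [apply Rmin_glb_lt; [lra| apply (cond_pos d2)]|].
    apply Rdiv_lt_0_compat; [lra| pose proof (Rabs_pos al'); lra]. }
  exists d; split; [exact Hdp|].
  intros s Hs.
  assert (Hs1 : Rabs (s - s0) < d1).
  { eapply Rlt_le_trans; [exact Hs|]. unfold d. eapply Rle_trans; [apply Rmin_l|apply Rmin_l]. }
  set (D := al s - al s0).
  assert (HD : Rabs (D - al' * (s - s0)) <= e2 * Rabs (s - s0)).
  { destruct (Req_dec s s0) as [E|E].
    - subst D. rewrite E. replace (al s0 - al s0 - al' * (s0 - s0)) with 0 by ring.
      rewrite Rabs_R0. replace (s0 - s0) with 0 by ring. rewrite Rabs_R0. lra.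
    - assert (Hh : s - s0 <> 0) by lra.
      assert (Hh2 : Rabs (s - s0) < d2).
      { eapply Rlt_le_trans; [exact Hs|]. unfold d. eapply Rle_trans; [apply Rmin_l|apply Rmin_r]. }
      specialize (Hd2 (s - s0) Hh Hh2).
      replace (s0 + (s - s0)) with s in Hd2 by ring.
      replace (D - al' * (s - s0)) with (((al s - al s0) / (s - s0) - al') * (s - s0))
        by (unfold D; field; exact Hh).
      rewrite Rabs_mult. apply Rmult_le_compat_r; [apply Rabs_pos| lra]. }
  assert (HDb : Rabs D <= (Rabs al' + 1) * Rabs (s - s0)).
  { replace D with ((D - al' * (s - s0)) + al' * (s - s0)) by ring.
    eapply Rle_trans; [apply Rabs_triang|]. rewrite Rabs_mult.
    assert (e2 <= 1) by (unfold e2; apply Rmin_l).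
    pose proof (Rabs_pos (s - s0)). nra. }
  assert (HDs : Rabs D < d1).
  { eapply Rle_lt_trans; [exact HDb|].
    assert (Rabs (s - s0) < d1 / (Rabs al' + 1)).
    { eapply Rlt_le_trans; [exact Hs|]. unfold d; apply Rmin_r. }
    pose proof (Rabs_pos al').
    apply Rmult_lt_compat_l with (r := Rabs al' + 1) in H; [|lra].
    replace ((Rabs al' + 1) * (d1 / (Rabs al' + 1))) with d1 in H by (field; lra). lra. }
  destruct (MVT_gen (h s) (al s0) (al s) (dh s)) as [cc [Hcc Hmvt]].
  { intros; apply Hd. }
  { intros y _. apply continuity_pt_filterlim. apply (@ex_derive_continuous R_AbsRing R_NormedModule).
    eexists; apply Hd. }
  assert (Hc' : Rabs (dh s cc - L) < e1).
  { apply Hc1; [exact Hs1|].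
    assert (Rabs (cc - al s0) <= Rabs D).
    { unfold D. destruct Hcc as [Hc1' Hc2'].
      unfold Rmin, Rmax in *. destruct (Rle_dec (al s0) (al s));
      repeat (rewrite Rabs_right in * by lra || rewrite Rabs_left1 in * by lra); try lra.
      all: unfold Rabs; repeat destruct Rcase_abs; lra. }
    lra. }
  rewrite Hmvt. fold D.
  replace (dh s cc * D - L * al' * (s - s0))
    with ((dh s cc - L) * D + L * (D - al' * (s - s0))) by ring.
  eapply Rle_trans; [apply Rabs_triang|]. rewrite !Rabs_mult.
  assert (H1 : Rabs (dh s cc - L) * Rabs D <= e1 * ((Rabs al' + 1) * Rabs (s - s0))).
  { apply Rmult_le_compat; try apply Rabs_pos; lra. }
  assert (H2 : Rabs L * Rabs (D - al' * (s - s0)) <= Rabs L * (e2 * Rabs (s - s0))).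
  { apply Rmult_le_compat_l; [apply Rabs_pos| exact HD]. }
  assert (H3 : e1 * (Rabs al' + 1) = eps / 2) by (unfold e1; pose proof (Rabs_pos al'); field; lra).
  assert (H4 : Rabs L * e2 <= eps / 2).
  { assert (e2 <= eps / (2 * (Rabs L + 1))) by (unfold e2; apply Rmin_r).
    pose proof (Rabs_pos L).
    assert (H5 : Rabs L * e2 <= (Rabs L + 1) * (eps / (2 * (Rabs L + 1)))) by nra.
    replace ((Rabs L + 1) * (eps / (2 * (Rabs L + 1)))) with (eps/2) in H5 by (field; lra). lra. }
  pose proof (Rabs_pos (s - s0)). nra.
Qed.

Lemma cont_extract (g : R * V3 -> R) (t0 : R) (X0 : V3) :
  continuous g (t0, X0) ->
  forall eps, 0 < eps -> exists d, 0 < d /\ forall t Y,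
    Rabs (t - t0) < d -> Rabs (vc Y ax - vc X0 ax) < d ->
    Rabs (vc Y ay - vc X0 ay) < d -> Rabs (vc Y az - vc X0 az) < d ->
    Rabs (g (t, Y) - g (t0, X0)) < eps.
Proof.
  intros Hc eps Heps.
  assert (HL := Hc _ (locally_ball (g (t0, X0)) (mkposreal eps Heps))).
  destruct HL as [d Hd].
  exists d; split; [apply cond_pos|].
  intros t [[y1 y2] y3] H1 H2 H3 H4.
  destruct X0 as [[x1 x2] x3]. simpl in *.
  apply (Hd (t, ((y1, y2), y3))).
  repeat split; assumption.
Qed.

Lemma deriv_cont (g : R -> R) (s0 l : R) : is_derive g s0 l ->
  forall eps, 0 < eps -> exists d, 0 < d /\ forall s, Rabs (s - s0) < d -> Rabs (g s - g s0) < eps.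
Proof.
  intros Hd eps Heps.
  assert (Hc : continuous g s0) by (apply (@ex_derive_continuous R_AbsRing R_NormedModule); eexists; exact Hd).
  destruct (Hc _ (locally_ball (g s0) (mkposreal eps Heps))) as [d Hd'].
  exists d; split; [apply cond_pos|]. intros s Hs. apply (Hd' s). exact Hs.
Qed.

Lemma V3_eta (v : V3) : v = mk3 (vc v ax) (vc v ay) (vc v az).
Proof. destruct v as [[? ?] ?]; reflexivity. Qed.

Lemma upd_vc (v : V3) i : upd v i (vc v i) = v.
Proof. destruct v as [[? ?] ?]; destruct i; reflexivity. Qed.

Lemma C1_dt f t X : IsC1 f -> is_derive (fun u => f u X) t (pd_t f t X).
Proof. intros H. destruct (H t X) as [H1 _]. apply Derive_correct. exact H1. Qed.

Lemma C1_dx f t X i : IsC1 f -> is_derive (fun u => f t (upd X i u)) (vc X i) (pd_x f t X i).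
Proof. intros H. destruct (H t X) as [_ [H1 _]]. apply Derive_correct. apply H1. Qed.

Lemma C1_ct f t0 X0 : IsC1 f -> forall eps, 0 < eps -> exists d, 0 < d /\ forall t Y,
    Rabs (t - t0) < d -> Rabs (vc Y ax - vc X0 ax) < d ->
    Rabs (vc Y ay - vc X0 ay) < d -> Rabs (vc Y az - vc X0 az) < d ->
    Rabs (pd_t f t Y - pd_t f t0 X0) < eps.
Proof.
  intros H. destruct (H t0 X0) as [_ [_ [H1 _]]].
  apply (cont_extract (fun p => pd_t f (fst p) (snd p)) t0 X0 H1).
Qed.

Lemma C1_cx f t0 X0 i : IsC1 f -> forall eps, 0 < eps -> exists d, 0 < d /\ forall t Y,
    Rabs (t - t0) < d -> Rabs (vc Y ax - vc X0 ax) < d ->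
    Rabs (vc Y ay - vc X0 ay) < d -> Rabs (vc Y az - vc X0 az) < d ->
    Rabs (pd_x f t Y i - pd_x f t0 X0 i) < eps.
Proof.
  intros H. destruct (H t0 X0) as [_ [_ [_ H1]]].
  apply (cont_extract (fun p => pd_x f (fst p) (snd p) i) t0 X0 (H1 i)).
Qed.

Lemma min4 (d1 d2 d3 d4 : R) : 0 < d1 -> 0 < d2 -> 0 < d3 -> 0 < d4 ->
  exists d, 0 < d /\ d <= d1 /\ d <= d2 /\ d <= d3 /\ d <= d4.
Proof.
  intros. exists (Rmin (Rmin d1 d2) (Rmin d3 d4)).
  repeat split.
  - repeat apply Rmin_glb_lt; auto.
  - eapply Rle_trans; apply Rmin_l.
  - eapply Rle_trans; [apply Rmin_l| apply Rmin_r].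
  - eapply Rle_trans; [apply Rmin_r| apply Rmin_l].
  - eapply Rle_trans; apply Rmin_r.
Qed.

Lemma chain (f : R -> V3 -> R) (T : R -> R) (X : R -> V3) (s0 dT dx dy dz : R) :
  IsC1 f -> is_derive T s0 dT ->
  is_derive (fun s => vc (X s) ax) s0 dx ->
  is_derive (fun s => vc (X s) ay) s0 dy ->
  is_derive (fun s => vc (X s) az) s0 dz ->
  is_derive (fun s => f (T s) (X s)) s0
    (pd_t f (T s0) (X s0) * dT + pd_x f (T s0) (X s0) ax * dx
     + pd_x f (T s0) (X s0) ay * dy + pd_x f (T s0) (X s0) az * dz).
Proof.
  intros Hf HT Hx Hy Hz.
  set (T0 := T s0). set (X0 := X s0).
  set (xs := fun s => vc (X s) ax). set (ys := fun s => vc (X s) ay). set (zs := fun s => vc (X s) az).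
  set (x0 := xs s0). set (y0 := ys s0). set (z0 := zs s0).
  assert (Hcomp : forall e, 0 < e -> exists d, 0 < d /\ forall s, Rabs (s - s0) < d ->
     Rabs (xs s - x0) < e /\ Rabs (ys s - y0) < e /\ Rabs (zs s - z0) < e /\ Rabs (T s - T0) < e).
  { intros e He.
    destruct (deriv_cont _ _ _ Hx e He) as [d1 [Hd1 H1]].
    destruct (deriv_cont _ _ _ Hy e He) as [d2 [Hd2 H2]].
    destruct (deriv_cont _ _ _ Hz e He) as [d3 [Hd3 H3]].
    destruct (deriv_cont _ _ _ HT e He) as [d4 [Hd4 H4]].
    destruct (min4 d1 d2 d3 d4) as [d [Hd [? [? [? ?]]]]]; auto.
    exists d; split; auto. intros s Hs. repeat split; [apply H1|apply H2|apply H3|apply H4]; lra. }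
  assert (S0 := step_lemma (fun s r => f r (X s)) (fun s r => pd_t f r (X s)) T s0 dT (pd_t f T0 X0)
     (fun s r => C1_dt f r (X s) Hf)).
  assert (S1 := step_lemma (fun s r => f T0 (mk3 r (ys s) (zs s)))
                    (fun s r => pd_x f T0 (mk3 r (ys s) (zs s)) ax) xs s0 dx (pd_x f T0 X0 ax)
     (fun s r => C1_dx f T0 (mk3 r (ys s) (zs s)) ax Hf)).
  assert (S2 := step_lemma (fun s r => f T0 (mk3 x0 r (zs s)))
                    (fun s r => pd_x f T0 (mk3 x0 r (zs s)) ay) ys s0 dy (pd_x f T0 X0 ay)
     (fun s r => C1_dx f T0 (mk3 x0 r (zs s)) ay Hf)).
  assert (S3 := step_lemma (fun s r => f T0 (mk3 x0 y0 r))
                    (fun s r => pd_x f T0 (mk3 x0 y0 r) az) zs s0 dz (pd_x f T0 X0 az)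
     (fun s r => C1_dx f T0 (mk3 x0 y0 r) az Hf)).
  assert (HX0 : X0 = mk3 x0 y0 z0) by apply V3_eta.
  specialize (S0 ltac:(
    intros e He; destruct (C1_ct f T0 X0 Hf e He) as [d1 [Hd1 H1]];
    destruct (Hcomp d1 Hd1) as [d2 [Hd2 H2]];
    exists (Rmin d1 d2); split; [apply Rmin_glb_lt; auto|];
    intros s r Hs Hr;
    assert (Hs2 : Rabs (s - s0) < d2) by (eapply Rlt_le_trans; [exact Hs| apply Rmin_r]);
    assert (Hr1 : Rabs (r - T0) < d1) by (eapply Rlt_le_trans; [exact Hr| apply Rmin_l]);
    destruct (H2 s Hs2) as [? [? [? ?]]];
    apply (H1 r (X s)); auto; rewrite HX0; assumption) HT).
  specialize (S1 ltac:(
    intros e He; destruct (C1_cx f T0 X0 ax Hf e He) as [d1 [Hd1 H1]];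
    destruct (Hcomp d1 Hd1) as [d2 [Hd2 H2]];
    exists (Rmin d1 d2); split; [apply Rmin_glb_lt; auto|];
    intros s r Hs Hr;
    assert (Hs2 : Rabs (s - s0) < d2) by (eapply Rlt_le_trans; [exact Hs| apply Rmin_r]);
    assert (Hr1 : Rabs (r - x0) < d1) by (eapply Rlt_le_trans; [exact Hr| apply Rmin_l]);
    destruct (H2 s Hs2) as [? [? [? ?]]];
    apply (H1 T0 (mk3 r (ys s) (zs s))); rewrite ?HX0; simpl;
      try (unfold Rminus; rewrite Rplus_opp_r, Rabs_R0; exact Hd1); assumption) Hx).
  specialize (S2 ltac:(
    intros e He; destruct (C1_cx f T0 X0 ay Hf e He) as [d1 [Hd1 H1]];
    destruct (Hcomp d1 Hd1) as [d2 [Hd2 H2]];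
    exists (Rmin d1 d2); split; [apply Rmin_glb_lt; auto|];
    intros s r Hs Hr;
    assert (Hs2 : Rabs (s - s0) < d2) by (eapply Rlt_le_trans; [exact Hs| apply Rmin_r]);
    assert (Hr1 : Rabs (r - y0) < d1) by (eapply Rlt_le_trans; [exact Hr| apply Rmin_l]);
    destruct (H2 s Hs2) as [? [? [? ?]]];
    apply (H1 T0 (mk3 x0 r (zs s))); rewrite ?HX0; simpl;
      try (unfold Rminus; rewrite Rplus_opp_r, Rabs_R0; exact Hd1); assumption) Hy).
  specialize (S3 ltac:(
    intros e He; destruct (C1_cx f T0 X0 az Hf e He) as [d1 [Hd1 H1]];
    destruct (Hcomp d1 Hd1) as [d2 [Hd2 H2]];
    exists (Rmin d1 d2); split; [apply Rmin_glb_lt; auto|];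
    intros s r Hs Hr;
    assert (Hs2 : Rabs (s - s0) < d2) by (eapply Rlt_le_trans; [exact Hs| apply Rmin_r]);
    assert (Hr1 : Rabs (r - z0) < d1) by (eapply Rlt_le_trans; [exact Hr| apply Rmin_l]);
    destruct (H2 s Hs2) as [? [? [? ?]]];
    apply (H1 T0 (mk3 x0 y0 r)); rewrite ?HX0; simpl;
      try (unfold Rminus; rewrite Rplus_opp_r, Rabs_R0; exact Hd1); assumption) Hz).
  apply is_derive_Reals. intros eps Heps.
  assert (He : 0 < eps / 8) by lra.
  destruct (S0 _ He) as [d0 [Hd0 K0]].
  destruct (S1 _ He) as [d1 [Hd1 K1]].
  destruct (S2 _ He) as [d2 [Hd2 K2]].
  destruct (S3 _ He) as [d3 [Hd3 K3]].
  destruct (min4 d0 d1 d2 d3) as [d [Hd [? [? [? ?]]]]]; auto.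
  exists (mkposreal d Hd). intros h Hh Hhd. simpl in Hhd.
  set (s := s0 + h).
  assert (Hs : Rabs (s - s0) < d) by (unfold s; replace (s0 + h - s0) with h by ring; exact Hhd).
  specialize (K0 s ltac:(lra)). specialize (K1 s ltac:(lra)).
  specialize (K2 s ltac:(lra)). specialize (K3 s ltac:(lra)).
  cbv beta in K0, K1, K2, K3.
  assert (HXs : X s = mk3 (xs s) (ys s) (zs s)) by apply V3_eta.
  fold X0 in K0.
  rewrite HXs in K0.
  fold T0 X0.
  replace (s0 + h) with s by reflexivity. rewrite HXs, HX0.
  rewrite HX0 in K0, K1, K2, K3.
  fold x0 in K1. fold y0 in K2. fold z0 in K3.
  assert (Hh' : s - s0 = h) by (unfold s; ring). rewrite Hh' in K0, K1, K2, K3.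
  replace ((f (T s) (mk3 (xs s) (ys s) (zs s)) - f T0 (mk3 x0 y0 z0)) / h -
     (pd_t f T0 (mk3 x0 y0 z0) * dT + pd_x f T0 (mk3 x0 y0 z0) ax * dx +
      pd_x f T0 (mk3 x0 y0 z0) ay * dy + pd_x f T0 (mk3 x0 y0 z0) az * dz))
   with ((  (f (T s) (mk3 (xs s) (ys s) (zs s)) - f T0 (mk3 (xs s) (ys s) (zs s)) - pd_t f T0 (mk3 x0 y0 z0) * dT * h)
          + (f T0 (mk3 (xs s) (ys s) (zs s)) - f T0 (mk3 x0 (ys s) (zs s)) - pd_x f T0 (mk3 x0 y0 z0) ax * dx * h)
          + (f T0 (mk3 x0 (ys s) (zs s)) - f T0 (mk3 x0 y0 (zs s)) - pd_x f T0 (mk3 x0 y0 z0) ay * dy * h)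
          + (f T0 (mk3 x0 y0 (zs s)) - f T0 (mk3 x0 y0 z0) - pd_x f T0 (mk3 x0 y0 z0) az * dz * h)) / h)
   by (field; exact Hh).
  unfold Rdiv. rewrite Rabs_mult, Rabs_inv.
  assert (Hhp : 0 < Rabs h) by (apply Rabs_pos_lt; exact Hh).
  apply Rmult_lt_reg_r with (Rabs h); [exact Hhp|].
  rewrite Rmult_assoc, Rinv_l by lra. rewrite Rmult_1_r.
  eapply Rle_lt_trans; [apply Rabs_triang|].
  eapply Rle_lt_trans; [apply Rplus_le_compat_r; apply Rabs_triang|].
  eapply Rle_lt_trans; [apply Rplus_le_compat_r; apply Rplus_le_compat_r; apply Rabs_triang|].
  fold T0 in K0. nra.
Qed.

Lemma inv_deriv (xi F G : R -> R) (r t0 g d : R) :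
  0 < r -> 0 < d ->
  (forall t, Rabs (t - t0) < r -> continuity_pt xi t) ->
  (forall t s, Rabs (t - t0) < r -> Rabs (s - t0) < r -> t < s -> xi t < xi s) ->
  (forall t, Rabs (t - t0) < r -> F (xi t) = G t) ->
  is_derive G t0 g -> is_derive xi t0 d ->
  is_derive F (xi t0) (g / d).
Proof.
  intros Hr Hd Hcont Hmon HFG HG Hxi.
  assert (HH : is_derive (fun t => G t - g / d * xi t) t0 0).
  { replace 0 with (g - g / d * d) by (field; lra).
    apply (is_derive_minus G (fun t => g / d * xi t)); [exact HG|].
    apply (is_derive_scal xi). exact Hxi. }
  apply is_derive_Reals in HH. apply is_derive_Reals in Hxi.
  apply is_derive_Reals. intros eps Heps.
  assert (He1 : 0 < eps * d / 4) by (apply Rmult_lt_0_compat; [apply Rmult_lt_0_compat|]; lra).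
  destruct (HH _ He1) as [d1 Hd1].
  assert (He2 : 0 < d / 2) by lra.
  destruct (Hxi _ He2) as [d2 Hd2].
  set (rho := Rmin (Rmin d1 d2) r / 2).
  assert (Hrho : 0 < rho).
  { unfold rho. pose proof (cond_pos d1); pose proof (cond_pos d2).
    assert (0 < Rmin (Rmin d1 d2) r) by (repeat apply Rmin_glb_lt; lra). lra. }
  assert (Hrho1 : rho < d1 /\ rho < d2 /\ rho < r).
  { unfold rho. pose proof (cond_pos d1); pose proof (cond_pos d2).
    pose proof (Rmin_l (Rmin d1 d2) r); pose proof (Rmin_r (Rmin d1 d2) r).
    pose proof (Rmin_l d1 d2); pose proof (Rmin_r d1 d2).
    assert (0 < Rmin (Rmin d1 d2) r) by (repeat apply Rmin_glb_lt; lra). lra. }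
  assert (Hab : forall t, Rabs (t - t0) <= rho -> Rabs (t - t0) < r) by (intros; lra).
  assert (Hp : xi t0 < xi (t0 + rho)).
  { apply Hmon; try (apply Hab); try lra;
    [replace (t0 - t0) with 0 by ring; rewrite Rabs_R0; lra
    |replace (t0 + rho - t0) with rho by ring; rewrite Rabs_right; lra]. }
  assert (Hm : xi (t0 - rho) < xi t0).
  { apply Hmon; try (apply Hab); try lra;
    [replace (t0 - rho - t0) with (- rho) by ring; rewrite Rabs_Ropp, Rabs_right; lra
    |replace (t0 - t0) with 0 by ring; rewrite Rabs_R0; lra]. }
  set (de := Rmin (xi (t0 + rho) - xi t0) (xi t0 - xi (t0 - rho))).
  assert (Hde : 0 < de) by (apply Rmin_glb_lt; lra).
  exists (mkposreal de Hde). intros k Hk Hkd. simpl in Hkd.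
  assert (Hk1 : k < xi (t0 + rho) - xi t0) by (apply Rabs_def2 in Hkd; pose proof (Rmin_l (xi (t0 + rho) - xi t0) (xi t0 - xi (t0 - rho))); fold de in H; lra).
  assert (Hk2 : - (xi t0 - xi (t0 - rho)) < k) by (apply Rabs_def2 in Hkd; pose proof (Rmin_r (xi (t0 + rho) - xi t0) (xi t0 - xi (t0 - rho))); fold de in H; lra).
  destruct (IVT_interv (fun s => xi s - (xi t0 + k)) (t0 - rho) (t0 + rho)) as [t [Ht Hxt]].
  { intros a0 Ha0. apply continuity_pt_minus; [apply Hcont| apply continuity_pt_const; intros ? ?; reflexivity].
    apply Rabs_def1; lra. }
  { cbv beta; lra. }
  { cbv beta; lra. }
  { cbv beta; lra. }
  simpl in Hxt.
  assert (Hxt' : xi t = xi t0 + k) by lra.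
  set (h := t - t0).
  assert (Hh : h <> 0).
  { intro E. unfold h in E. assert (t = t0) by lra. subst t. lra. }
  assert (Hha : Rabs h <= rho).
  { unfold h; unfold Rabs; destruct Rcase_abs; lra. }
  assert (Hhr : Rabs (t - t0) < r) by (fold h; lra).
  assert (Hh1 : Rabs h < d1) by lra.
  assert (Hh2 : Rabs h < d2) by lra.
  specialize (Hd1 h Hh Hh1). specialize (Hd2 h Hh Hh2).
  replace (t0 + h) with t in Hd1, Hd2 by (unfold h; ring).
  rewrite <- Hxt'.
  rewrite (HFG t Hhr).
  rewrite (HFG t0) by (replace (t0 - t0) with 0 by ring; rewrite Rabs_R0; lra).
  assert (Hk' : k = xi t - xi t0) by lra.
  rewrite Hk'.
  assert (Hq : d / 2 < (xi t - xi t0) / h) by (apply Rabs_def2 in Hd2; lra).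
  replace ((G t - G t0) / (xi t - xi t0) - g / d)
    with (((G t - g / d * xi t - (G t0 - g / d * xi t0)) / h) / ((xi t - xi t0) / h))
    by (field; repeat split; try lra; intro E; rewrite Hk' in Hk; lra).
  rewrite Rminus_0_r in Hd1.
  unfold Rdiv at 1. rewrite Rabs_mult, Rabs_inv.
  rewrite (Rabs_right ((xi t - xi t0) / h)) by lra.
  apply Rle_lt_trans with ((eps * d / 4) * / (d / 2)).
  { apply Rmult_le_compat; try lra.
    - apply Rabs_pos.
    - left; apply Rinv_0_lt_compat; lra.
    - apply Rinv_le_contravar; lra. }
  replace (eps * d / 4 * / (d / 2)) with (eps / 2) by (field; lra). lra.
Qed.

Lemma pdV_Lrel m c q A0 A X V t i : 0 < c -> dot V V < c ^ 2 ->
  is_derive (fun s => Lrel m c q A0 A X (upd V i s) t) (vc V i)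
    (m * vc V i / sqrt (1 - dot V V / c ^ 2) + q * vc (A t X) i / c).
Proof.
  intros Hc Hv.
  assert (Hpos : 0 < 1 - dot V V / c ^ 2).
  { assert (Hc2 : 0 < c^2) by (apply pow_lt; lra).
    assert (H1 : dot V V / c^2 < c^2 / c^2) by (apply Rmult_lt_compat_r; [apply Rinv_0_lt_compat|]; lra).
    replace (c^2/c^2) with 1 in H1 by (field; lra). lra. }
  unfold Lrel. destruct i; unfold dot in *; simpl; destruct V as [[v1 v2] v3]; simpl in *;
  auto_derive; try (split; [|exact I]); try lra.
  all: unfold Rminus, Rdiv in *; pose proof (sqrt_lt_R0 _ Hpos);
    field; split; lra.
Qed.

Lemma lin4 (f0 f1 f2 f3 : R -> R) x d0 d1 d2 d3 K q c v1 v2 v3 :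
  is_derive f0 x d0 -> is_derive f1 x d1 -> is_derive f2 x d2 -> is_derive f3 x d3 ->
  is_derive (fun s => K - q * (f0 s - (f1 s * v1 + f2 s * v2 + f3 s * v3) / c)) x
    (- q * (d0 - (d1 * v1 + d2 * v2 + d3 * v3) / c)).
Proof.
  intros H0 H1 H2 H3.
  auto_derive.
  - repeat split; eexists; eassumption.
  - rewrite (is_derive_unique (fun y : R => f0 y) x d0 H0), (is_derive_unique (fun y : R => f1 y) x d1 H1), (is_derive_unique (fun y : R => f2 y) x d2 H2), (is_derive_unique (fun y : R => f3 y) x d3 H3). unfold Rminus, Rdiv. ring.
Qed.

Lemma pdV_Lhat_z m c q A0 A X W xi S : 0 < c -> 0 < 1 + vc W az ->
  S = sqrt (1 - dot (Defs.scal (c / (1 + vc W az)) W) (Defs.scal (c / (1 + vc W az)) W) / c ^ 2) ->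
  dot (Defs.scal (c / (1 + vc W az)) W) (Defs.scal (c / (1 + vc W az)) W) < c ^ 2 ->
  is_derive (fun s => Lhat c (Lrel m c q A0 A) X (upd W az s) xi) (vc W az)
    (- m * c ^ 2 / ((1 + vc W az) * S)
     - q * A0 ((xi + vc X az) / c) X + q * vc (A ((xi + vc X az) / c) X) az).
Proof.
  intros Hc Hw HS Hv.
  assert (Hpos : 0 < 1 - dot (Defs.scal (c / (1 + vc W az)) W) (Defs.scal (c / (1 + vc W az)) W) / c ^ 2).
  { assert (Hc2 : 0 < c^2) by (apply pow_lt; lra).
    assert (H1 : forall u, u < c^2 -> u / c^2 < c^2 / c^2) by (intros; apply Rmult_lt_compat_r; [apply Rinv_0_lt_compat|]; lra).
    specialize (H1 _ Hv).
    replace (c^2/c^2) with 1 in H1 by (field; lra). lra. }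
  assert (HSp : 0 < S) by (rewrite HS; apply sqrt_lt_R0; exact Hpos).
  assert (HS2 : S ^ 2 = 1 - dot (Defs.scal (c / (1 + vc W az)) W) (Defs.scal (c / (1 + vc W az)) W) / c ^ 2).
  { rewrite HS, <- Rsqr_pow2. apply Rsqr_sqrt. lra. }
  unfold Lhat, Lrel, dot, Defs.scal in *. destruct W as [[w1 w2] w3]. simpl in *.
  set (a0 := A0 _ X) in *. set (AA := A _ X). destruct AA as [[a1 a2] a3]. simpl.
  auto_derive.
  all: try (repeat split; try lra; exact Hpos).
  match goal with |- context [sqrt ?u] => replace (sqrt u) with S end.
    apply Rmult_eq_reg_r with S; [| lra].
    field_simplify; try lra.
    replace (S ^ 2) with (S * (S * 1)) by ring. rewrite HS2. field. repeat split; try lra. intro HH. assert (0 < c * ((1+w3)*(1+w3))) by (apply Rmult_lt_0_compat; nra). nra.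
Qed.

Definition Aj (A : R -> V3 -> V3) (j : axis) : R -> V3 -> R := fun t X => vc (A t X) j.

Lemma pdX_Lrel m c q A0 A X V t i : IsC1 A0 -> (forall j, IsC1 (Aj A j)) ->
  is_derive (fun s => Lrel m c q A0 A (upd X i s) V t) (vc X i)
   (- q * (pd_x A0 t X i - (pd_x (Aj A ax) t X i * vc V ax + pd_x (Aj A ay) t X i * vc V ay
                            + pd_x (Aj A az) t X i * vc V az) / c)).
Proof.
  intros H0 HA.
  eapply is_derive_ext; [| apply (lin4 (fun s => A0 t (upd X i s)) (fun s => Aj A ax t (upd X i s))
     (fun s => Aj A ay t (upd X i s)) (fun s => Aj A az t (upd X i s)) (vc X i)
     _ _ _ _ (- m * c ^ 2 * sqrt (1 - dot V V / c ^ 2)) q c (vc V ax) (vc V ay) (vc V az))].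
  - intros s. reflexivity.
  - apply C1_dx; auto.
  - apply C1_dx; auto.
  - apply C1_dx; auto.
  - apply C1_dx; auto.
Qed.

Lemma chain_z f X xi c : IsC1 f -> c <> 0 ->
  is_derive (fun s => f ((xi + s) / c) (upd X az s)) (vc X az)
    (pd_t f ((xi + vc X az) / c) X / c + pd_x f ((xi + vc X az) / c) X az).
Proof.
  intros Hf Hc.
  pose proof (chain f (fun s => (xi + s) / c) (fun s => upd X az s) (vc X az) (/ c) 0 0 1 Hf) as H.
  rewrite upd_vc in H.
  replace (pd_t f ((xi + vc X az) / c) X / c + pd_x f ((xi + vc X az) / c) X az)
    with (pd_t f ((xi + vc X az) / c) X * / c + pd_x f ((xi + vc X az) / c) X ax * 0 +
     pd_x f ((xi + vc X az) / c) X ay * 0 + pd_x f ((xi + vc X az) / c) X az * 1) by (unfold Rdiv; ring).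
  apply H.
  - auto_derive; auto. field; auto.
  - destruct X as [[? ?] ?]; simpl. auto_derive; auto.
  - destruct X as [[? ?] ?]; simpl. auto_derive; auto.
  - destruct X as [[? ?] ?]; simpl. auto_derive; auto.
Qed.

Lemma pdX_Lhat_perp m c q A0 A X W xi i : IsC1 A0 -> (forall j, IsC1 (Aj A j)) -> i <> az ->
  is_derive (fun s => Lhat c (Lrel m c q A0 A) (upd X i s) W xi) (vc X i)
   ((1 + vc W az) * (- q * (pd_x A0 ((xi + vc X az) / c) X i
      - (pd_x (Aj A ax) ((xi + vc X az) / c) X i * vc (Defs.scal (c / (1 + vc W az)) W) ax
       + pd_x (Aj A ay) ((xi + vc X az) / c) X i * vc (Defs.scal (c / (1 + vc W az)) W) ay
       + pd_x (Aj A az) ((xi + vc X az) / c) X i * vc (Defs.scal (c / (1 + vc W az)) W) az) / c))).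
Proof.
  intros H0 HA Hi.
  eapply is_derive_ext; [| apply (is_derive_scal (fun s => Lrel m c q A0 A (upd X i s)
       (Defs.scal (c / (1 + vc W az)) W) ((xi + vc X az) / c)))].
  - intros s. unfold Lhat. destruct i; [reflexivity|reflexivity|contradiction].
  - apply pdX_Lrel; auto.
Qed.

Lemma pdX_Lhat_z m c q A0 A X W xi : 0 < c -> IsC1 A0 -> (forall j, IsC1 (Aj A j)) ->
  is_derive (fun s => Lhat c (Lrel m c q A0 A) (upd X az s) W xi) (vc X az)
   ((1 + vc W az) * (- q * ((pd_t A0 ((xi + vc X az) / c) X / c + pd_x A0 ((xi + vc X az) / c) X az)
      - ((pd_t (Aj A ax) ((xi + vc X az) / c) X / c + pd_x (Aj A ax) ((xi + vc X az) / c) X az)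
           * vc (Defs.scal (c / (1 + vc W az)) W) ax
       + (pd_t (Aj A ay) ((xi + vc X az) / c) X / c + pd_x (Aj A ay) ((xi + vc X az) / c) X az)
           * vc (Defs.scal (c / (1 + vc W az)) W) ay
       + (pd_t (Aj A az) ((xi + vc X az) / c) X / c + pd_x (Aj A az) ((xi + vc X az) / c) X az)
           * vc (Defs.scal (c / (1 + vc W az)) W) az) / c))).
Proof.
  intros Hc H0 HA.
  set (V := Defs.scal (c / (1 + vc W az)) W).
  eapply is_derive_ext; [| apply (is_derive_scal (fun s =>
     - m * c ^ 2 * sqrt (1 - dot V V / c ^ 2) - q * (A0 ((xi + s) / c) (upd X az s)
       - (Aj A ax ((xi + s) / c) (upd X az s) * vc V ax + Aj A ay ((xi + s) / c) (upd X az s) * vc V ay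
          + Aj A az ((xi + s) / c) (upd X az s) * vc V az) / c)))].
  - intros s. unfold Lhat, Lrel. destruct X as [[? ?] ?]. reflexivity.
  - apply (lin4 (fun s => A0 ((xi + s) / c) (upd X az s)) (fun s => Aj A ax ((xi + s) / c) (upd X az s))
     (fun s => Aj A ay ((xi + s) / c) (upd X az s)) (fun s => Aj A az ((xi + s) / c) (upd X az s)));
    apply chain_z; auto; lra.
Qed.

Lemma pdV_Lhat_perp m c q A0 A X W xi i : 0 < c -> 0 < 1 + vc W az -> i <> az ->
  dot (Defs.scal (c / (1 + vc W az)) W) (Defs.scal (c / (1 + vc W az)) W) < c ^ 2 ->
  is_derive (fun s => Lhat c (Lrel m c q A0 A) X (upd W i s) xi) (vc W i)
    (c * (m * vc (Defs.scal (c / (1 + vc W az)) W) i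
            / sqrt (1 - dot (Defs.scal (c / (1 + vc W az)) W) (Defs.scal (c / (1 + vc W az)) W) / c ^ 2)
          + q * vc (A ((xi + vc X az) / c) X) i / c)).
Proof.
  intros Hc Hw Hi Hv.
  set (k := c / (1 + vc W az)).
  set (V := Defs.scal k W).
  set (tau := (xi + vc X az) / c).
  set (g := fun r => Lrel m c q A0 A X (upd V i r) tau).
  assert (Hg := pdV_Lrel m c q A0 A X V tau i Hc Hv).
  assert (Hk : (1 + vc W az) * k = c) by (unfold k; field; lra).
  replace (c * (m * vc V i / sqrt (1 - dot V V / c ^ 2) + q * vc (A tau X) i / c))
    with ((1 + vc W az) * (k * (m * vc V i / sqrt (1 - dot V V / c ^ 2) + q * vc (A tau X) i / c)))
    by (rewrite <- Rmult_assoc, Hk; reflexivity).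
  eapply is_derive_ext; [| apply (is_derive_scal (fun s => g (k * s)))].
  - intros s. unfold g, Lhat, V, tau, k. destruct W as [[? ?] ?]; destruct i; [reflexivity|reflexivity|contradiction].
  - apply (is_derive_comp g (fun s => k * s)).
    + replace (k * vc W i) with (vc V i) by (unfold V; destruct W as [[? ?] ?]; destruct i; reflexivity).
      exact Hg.
    + auto_derive; auto. ring.
Qed.

Lemma dS_lem (v1 v2 v3 : R -> R) t a1 a2 a3 c : 0 < c ->
  is_derive v1 t a1 -> is_derive v2 t a2 -> is_derive v3 t a3 ->
  0 < 1 - (v1 t * v1 t + v2 t * v2 t + v3 t * v3 t) / c ^ 2 ->
  is_derive (fun s => sqrt (1 - (v1 s * v1 s + v2 s * v2 s + v3 s * v3 s) / c ^ 2)) t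
    (- (v1 t * a1 + v2 t * a2 + v3 t * a3) /
       (c ^ 2 * sqrt (1 - (v1 t * v1 t + v2 t * v2 t + v3 t * v3 t) / c ^ 2))).
Proof.
  intros Hc H1 H2 H3 Hp.
  auto_derive.
  - repeat split; try (eexists; eassumption). unfold Rminus, Rdiv in Hp. simpl in Hp. exact Hp.
  - rewrite (is_derive_unique (fun y : R => v1 y) t a1 H1), (is_derive_unique (fun y : R => v2 y) t a2 H2),
      (is_derive_unique (fun y : R => v3 y) t a3 H3).
    pose proof (sqrt_lt_R0 _ Hp). unfold Rminus, Rdiv in *. simpl in *.
    field. split; lra.
Qed.

Lemma dP_lem (v S g : R -> R) t dv dS dg m q c : c <> 0 -> S t <> 0 ->
  is_derive v t dv -> is_derive S t dS -> is_derive g t dg ->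
  is_derive (fun s => m * v s / S s + q * g s / c) t
    (m * dv / S t - m * v t * dS / (S t * S t) + q * dg / c).
Proof.
  intros Hc HS H1 H2 H3.
  auto_derive.
  - repeat split; try (eexists; eassumption); auto.
  - rewrite (is_derive_unique (fun y : R => v y) t dv H1), (is_derive_unique (fun y : R => S y) t dS H2),
      (is_derive_unique (fun y : R => g y) t dg H3).
    field. split; auto.
Qed.

Lemma dGz_lem (v S g0 g3 : R -> R) t dv dS dg0 dg3 m q c : S t <> 0 ->
  is_derive v t dv -> is_derive S t dS -> is_derive g0 t dg0 -> is_derive g3 t dg3 ->
  is_derive (fun s => - m * c * (c - v s) / S s - q * g0 s + q * g3 s) t
    (m * c * dv / S t + m * c * (c - v t) * dS / (S t * S t) - q * dg0 + q * dg3).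
Proof.
  intros HS H1 H2 H3 H4.
  auto_derive.
  - repeat split; try (eexists; eassumption); auto.
  - rewrite (is_derive_unique (fun y : R => v y) t dv H1), (is_derive_unique (fun y : R => S y) t dS H2),
      (is_derive_unique (fun y : R => g0 y) t dg0 H3), (is_derive_unique (fun y : R => g3 y) t dg3 H4).
    field. auto.
Qed.

Lemma open_I a b t : in_I a b t -> exists r, 0 < r /\ forall s, Rabs (s - t) < r -> in_I a b s.
Proof.
  intros [Ha Hb].
  set (r1 := match a with Finite a0 => t - a0 | _ => 1 end).
  set (r2 := match b with Finite b0 => b0 - t | _ => 1 end).
  assert (H1 : 0 < r1) by (unfold r1; destruct a; simpl in *; lra).
  assert (H2 : 0 < r2) by (unfold r2; destruct b; simpl in *; lra).
  exists (Rmin r1 r2). split; [apply Rmin_glb_lt; auto|].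
  intros s Hs. apply Rabs_def2 in Hs. destruct Hs as [Hs1 Hs2].
  pose proof (Rmin_l r1 r2). pose proof (Rmin_r r1 r2).
  split.
  - unfold r1 in *; destruct a; simpl in *; auto; lra.
  - unfold r2 in *; destruct b; simpl in *; auto; lra.
Qed.

Lemma comp_deriv (x : R -> V3) a b t i :
  (forall t, in_I a b t -> forall i, ex_derive (fun s => vc (x s) i) t /\ ex_derive (fun s => vc (vel x s) i) t) ->
  in_I a b t -> is_derive (fun s => vc (x s) i) t (vc (vel x t) i).
Proof.
  intros Hx Ht. destruct (Hx t Ht i) as [H _].
  replace (vc (vel x t) i) with (Derive (fun s => vc (x s) i) t) by (destruct i; reflexivity).
  apply Derive_correct; exact H.
Qed.

Lemma acc_deriv (x : R -> V3) a b t i :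
  (forall t, in_I a b t -> forall i, ex_derive (fun s => vc (x s) i) t /\ ex_derive (fun s => vc (vel x s) i) t) ->
  in_I a b t -> is_derive (fun s => vc (vel x s) i) t (Derive (fun s => vc (vel x s) i) t).
Proof.
  intros Hx Ht. destruct (Hx t Ht i) as [_ H]. apply Derive_correct; exact H.
Qed.

Lemma vz_lt c V : 0 < c -> dot V V < c ^ 2 -> - c < vc V az < c.
Proof.
  intros Hc H. unfold dot in H. replace (c ^ 2) with (c * c) in H by ring.
  pose proof (Rle_0_sqr (vc V ax)); pose proof (Rle_0_sqr (vc V ay)); unfold Rsqr in *.
  assert (vc V az * vc V az < c * c) by nra.
  split; destruct (Rlt_or_le (vc V az) 0); nra.
Qed.

Lemma xi_deriv (x : R -> V3) a b c t :
  (forall t, in_I a b t -> forall i, ex_derive (fun s => vc (x s) i) t /\ ex_derive (fun s => vc (vel x s) i) t) ->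
  in_I a b t -> is_derive (fun s => c * s - vc (x s) az) t (c - vc (vel x t) az).
Proof.
  intros Hx Ht.
  apply (is_derive_minus (fun s => c * s) (fun s => vc (x s) az)).
  - auto_derive; auto; ring.
  - apply (comp_deriv x a b t az Hx Ht).
Qed.

Lemma xi_incr (x : R -> V3) a b c :
  (forall t, in_I a b t -> forall i, ex_derive (fun s => vc (x s) i) t /\ ex_derive (fun s => vc (vel x s) i) t) ->
  0 < c -> (forall t, in_I a b t -> dot (vel x t) (vel x t) < c ^ 2) ->
  forall s1 s2, in_I a b s1 -> in_I a b s2 -> s1 < s2 ->
  c * s1 - vc (x s1) az < c * s2 - vc (x s2) az.
Proof.
  intros Hx Hc Hv s1 s2 H1 H2 H12.
  apply (incr_function (fun s => c * s - vc (x s) az) a b (fun s => c - vc (vel x s) az)).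
  - intros s Ha Hb. apply (xi_deriv x a b c s Hx). split; auto.
  - intros s Ha Hb. destruct (vz_lt c (vel x s) Hc (Hv s (conj Ha Hb))). lra.
  - apply H1.
  - exact H12.
  - apply H2.
Qed.

Lemma ball_R (t r s : R) : ball t r s -> Rabs (s - t) < r.
Proof. intros H. exact H. Qed.

Lemma xh_deriv (x xh : R -> V3) a b c s j :
  (forall t, in_I a b t -> forall i, ex_derive (fun s => vc (x s) i) t /\ ex_derive (fun s => vc (vel x s) i) t) ->
  0 < c -> (forall t, in_I a b t -> dot (vel x t) (vel x t) < c ^ 2) ->
  (forall t, in_I a b t -> xh (c * t - vc (x t) az) = x t) ->
  in_I a b s ->
  is_derive (fun u => vc (xh u) j) (c * s - vc (x s) az) (vc (vel x s) j / (c - vc (vel x s) az)).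
Proof.
  intros Hx Hc Hv Hxh Hs.
  destruct (open_I a b s Hs) as [r [Hr Hball]].
  destruct (vz_lt c (vel x s) Hc (Hv s Hs)) as [_ Hlt].
  apply (inv_deriv (fun t => c * t - vc (x t) az) (fun u => vc (xh u) j) (fun t => vc (x t) j) r s).
  - exact Hr.
  - lra.
  - intros t Ht. apply continuity_pt_filterlim.
    apply (@ex_derive_continuous R_AbsRing R_NormedModule (fun t => c * t - vc (x t) az)).
    exists (c - vc (vel x t) az).
    apply (xi_deriv x a b c t Hx). apply Hball; exact Ht.
  - intros t u Ht Hu Htu. apply (xi_incr x a b c Hx Hc Hv); auto.
  - intros t Ht. cbv beta. rewrite (Hxh t (Hball t Ht)). reflexivity.
  - apply (comp_deriv x a b s j Hx Hs).
  - apply (xi_deriv x a b c s Hx Hs).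
Qed.

Lemma velxh (x xh : R -> V3) a b c s :
  (forall t, in_I a b t -> forall i, ex_derive (fun s => vc (x s) i) t /\ ex_derive (fun s => vc (vel x s) i) t) ->
  0 < c -> (forall t, in_I a b t -> dot (vel x t) (vel x t) < c ^ 2) ->
  (forall t, in_I a b t -> xh (c * t - vc (x t) az) = x t) ->
  in_I a b s ->
  vel xh (c * s - vc (x s) az) =
    mk3 (vc (vel x s) ax / (c - vc (vel x s) az)) (vc (vel x s) ay / (c - vc (vel x s) az))
        (vc (vel x s) az / (c - vc (vel x s) az)).
Proof.
  intros Hx Hc Hv Hxh Hs. unfold vel at 1.
  f_equal; apply is_derive_unique; apply (xh_deriv x xh a b c s); auto.
Qed.

Definition Sf c (x : R -> V3) s := sqrt (1 - dot (vel x s) (vel x s) / c ^ 2).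
Definition Pf m c q A (x : R -> V3) i s := m * vc (vel x s) i / Sf c x s + q * Aj A i s (x s) / c.
Definition Gz m c q A0 A (x : R -> V3) s :=
  - m * c * (c - vc (vel x s) az) / Sf c x s - q * A0 s (x s) + q * Aj A az s (x s).

Definition HypX (x : R -> V3) a b := forall t, in_I a b t -> forall i,
  ex_derive (fun s => vc (x s) i) t /\ ex_derive (fun s => vc (vel x s) i) t.

Lemma orig_mom m c q A0 A (x : R -> V3) a b s i : 0 < c ->
  (forall t, in_I a b t -> dot (vel x t) (vel x t) < c ^ 2) -> in_I a b s ->
  pdV (Lrel m c q A0 A) (x s) (vel x s) s i = Pf m c q A x i s.
Proof.
  intros Hc Hv Hs. unfold pdV.
  apply is_derive_unique. apply pdV_Lrel; auto.
Qed.

Lemma hat_facts (x xh : R -> V3) a b c s : HypX x a b -> 0 < c ->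
  (forall t, in_I a b t -> dot (vel x t) (vel x t) < c ^ 2) ->
  (forall t, in_I a b t -> xh (c * t - vc (x t) az) = x t) ->
  in_I a b s ->
  let W := vel xh (c * s - vc (x s) az) in
  vc W az = vc (vel x s) az / (c - vc (vel x s) az) /\
  0 < 1 + vc W az /\
  Defs.scal (c / (1 + vc W az)) W = vel x s /\
  ((c * s - vc (x s) az) + vc (xh (c * s - vc (x s) az)) az) / c = s.
Proof.
  intros Hx Hc Hv Hxh Hs W.
  destruct (vz_lt c (vel x s) Hc (Hv s Hs)) as [Hl1 Hl2].
  assert (HW := velxh x xh a b c s Hx Hc Hv Hxh Hs). fold W in HW.
  assert (Hz : vc W az = vc (vel x s) az / (c - vc (vel x s) az)) by (rewrite HW; reflexivity).
  assert (Hpos : 0 < 1 + vc W az).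
  { rewrite Hz. replace (1 + vc (vel x s) az / (c - vc (vel x s) az)) with (c / (c - vc (vel x s) az)) by (field; lra).
    apply Rdiv_lt_0_compat; lra. }
  split; [exact Hz|]. split; [exact Hpos|]. split.
  - rewrite Hz. rewrite HW.
    transitivity (mk3 (vc (vel x s) ax) (vc (vel x s) ay) (vc (vel x s) az)); [| symmetry; apply V3_eta].
    unfold Defs.scal. cbn [vc mk3 fst snd] in *. unfold mk3.
    repeat f_equal; field; split; lra.
  - rewrite (Hxh s Hs). field. lra.
Qed.

Lemma Sf_pos c (x : R -> V3) s : 0 < c -> dot (vel x s) (vel x s) < c ^ 2 -> 0 < Sf c x s.
Proof.
  intros Hc Hv. unfold Sf. apply sqrt_lt_R0.
  assert (Hc2 : 0 < c^2) by (apply pow_lt; lra).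
  assert (H1 : dot (vel x s) (vel x s) / c^2 < c^2 / c^2) by (apply Rmult_lt_compat_r; [apply Rinv_0_lt_compat|]; lra).
  replace (c^2/c^2) with 1 in H1 by (field; lra). lra.
Qed.

Section Hat.
Variables (m c q : R) (A0 : R -> V3 -> R) (A : R -> V3 -> V3) (x xh : R -> V3) (a b : Rbar) (s : R).

Lemma hat_mom_perp i : HypX x a b -> 0 < c ->
  (forall t, in_I a b t -> dot (vel x t) (vel x t) < c ^ 2) ->
  (forall t, in_I a b t -> xh (c * t - vc (x t) az) = x t) ->
  in_I a b s -> i <> az ->
  pdV (Lhat c (Lrel m c q A0 A)) (xh (c * s - vc (x s) az)) (vel xh (c * s - vc (x s) az))
      (c * s - vc (x s) az) i = c * Pf m c q A x i s.
Proof.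
  intros Hx Hc Hv Hxh Hs Hi.
  destruct (hat_facts x xh a b c s Hx Hc Hv Hxh Hs) as [Hz [Hpos [Hscal Htau]]].
  unfold pdV.
  assert (Hdot : dot (Defs.scal (c / (1 + vc (vel xh (c * s - vc (x s) az)) az)) (vel xh (c * s - vc (x s) az)))
                     (Defs.scal (c / (1 + vc (vel xh (c * s - vc (x s) az)) az)) (vel xh (c * s - vc (x s) az))) < c ^ 2)
    by (rewrite Hscal; apply Hv; exact Hs).
  rewrite (is_derive_unique _ _ _ (pdV_Lhat_perp m c q A0 A _ _ _ i Hc Hpos Hi Hdot)).
  rewrite Hscal, Htau, (Hxh s Hs). reflexivity.
Qed.

Lemma hat_mom_z : HypX x a b -> 0 < c ->
  (forall t, in_I a b t -> dot (vel x t) (vel x t) < c ^ 2) ->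
  (forall t, in_I a b t -> xh (c * t - vc (x t) az) = x t) ->
  in_I a b s ->
  pdV (Lhat c (Lrel m c q A0 A)) (xh (c * s - vc (x s) az)) (vel xh (c * s - vc (x s) az))
      (c * s - vc (x s) az) az = Gz m c q A0 A x s.
Proof.
  intros Hx Hc Hv Hxh Hs.
  destruct (hat_facts x xh a b c s Hx Hc Hv Hxh Hs) as [Hz [Hpos [Hscal Htau]]].
  destruct (vz_lt c (vel x s) Hc (Hv s Hs)) as [Hl1 Hl2].
  assert (HS := Sf_pos c x s Hc (Hv s Hs)).
  unfold pdV.
  assert (Hdot : dot (Defs.scal (c / (1 + vc (vel xh (c * s - vc (x s) az)) az)) (vel xh (c * s - vc (x s) az)))
                     (Defs.scal (c / (1 + vc (vel xh (c * s - vc (x s) az)) az)) (vel xh (c * s - vc (x s) az))) < c ^ 2)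
    by (rewrite Hscal; apply Hv; exact Hs).
  assert (HSe : Sf c x s = sqrt (1 - dot (Defs.scal (c / (1 + vc (vel xh (c * s - vc (x s) az)) az)) (vel xh (c * s - vc (x s) az)))
                     (Defs.scal (c / (1 + vc (vel xh (c * s - vc (x s) az)) az)) (vel xh (c * s - vc (x s) az))) / c ^ 2))
    by (rewrite Hscal; reflexivity).
  rewrite (is_derive_unique _ _ _ (pdV_Lhat_z m c q A0 A _ _ _ _ Hc Hpos HSe Hdot)).
  rewrite Htau, (Hxh s Hs), Hz. unfold Gz, Aj. field. split; lra.
Qed.

Lemma hat_pdX_perp i : HypX x a b -> 0 < c -> IsC1 A0 -> (forall j, IsC1 (Aj A j)) ->
  (forall t, in_I a b t -> dot (vel x t) (vel x t) < c ^ 2) ->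
  (forall t, in_I a b t -> xh (c * t - vc (x t) az) = x t) ->
  in_I a b s -> i <> az ->
  pdX (Lhat c (Lrel m c q A0 A)) (xh (c * s - vc (x s) az)) (vel xh (c * s - vc (x s) az))
      (c * s - vc (x s) az) i =
  (1 + vc (vel x s) az / (c - vc (vel x s) az)) * (- q * (pd_x A0 s (x s) i
      - (pd_x (Aj A ax) s (x s) i * vc (vel x s) ax
       + pd_x (Aj A ay) s (x s) i * vc (vel x s) ay
       + pd_x (Aj A az) s (x s) i * vc (vel x s) az) / c)).
Proof.
  intros Hx Hc HA0 HA Hv Hxh Hs Hi.
  destruct (hat_facts x xh a b c s Hx Hc Hv Hxh Hs) as [Hz [Hpos [Hscal Htau]]].
  unfold pdX.
  rewrite (is_derive_unique _ _ _ (pdX_Lhat_perp m c q A0 A _ _ _ i HA0 HA Hi)).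
  rewrite Hscal, Htau, (Hxh s Hs), Hz. reflexivity.
Qed.

Lemma hat_pdX_z : HypX x a b -> 0 < c -> IsC1 A0 -> (forall j, IsC1 (Aj A j)) ->
  (forall t, in_I a b t -> dot (vel x t) (vel x t) < c ^ 2) ->
  (forall t, in_I a b t -> xh (c * t - vc (x t) az) = x t) ->
  in_I a b s ->
  pdX (Lhat c (Lrel m c q A0 A)) (xh (c * s - vc (x s) az)) (vel xh (c * s - vc (x s) az))
      (c * s - vc (x s) az) az =
  (1 + vc (vel x s) az / (c - vc (vel x s) az)) * (- q * ((pd_t A0 s (x s) / c + pd_x A0 s (x s) az)
      - ((pd_t (Aj A ax) s (x s) / c + pd_x (Aj A ax) s (x s) az) * vc (vel x s) ax
       + (pd_t (Aj A ay) s (x s) / c + pd_x (Aj A ay) s (x s) az) * vc (vel x s) ay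
       + (pd_t (Aj A az) s (x s) / c + pd_x (Aj A az) s (x s) az) * vc (vel x s) az) / c)).
Proof.
  intros Hx Hc HA0 HA Hv Hxh Hs.
  destruct (hat_facts x xh a b c s Hx Hc Hv Hxh Hs) as [Hz [Hpos [Hscal Htau]]].
  unfold pdX.
  rewrite (is_derive_unique _ _ _ (pdX_Lhat_z m c q A0 A _ _ _ Hc HA0 HA)).
  rewrite Hscal, Htau, (Hxh s Hs), Hz. reflexivity.
Qed.

Lemma orig_pdX i : IsC1 A0 -> (forall j, IsC1 (Aj A j)) ->
  pdX (Lrel m c q A0 A) (x s) (vel x s) s i =
  - q * (pd_x A0 s (x s) i - (pd_x (Aj A ax) s (x s) i * vc (vel x s) ax
       + pd_x (Aj A ay) s (x s) i * vc (vel x s) ay + pd_x (Aj A az) s (x s) i * vc (vel x s) az) / c).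
Proof.
  intros HA0 HA. unfold pdX. apply is_derive_unique. apply pdX_Lrel; auto.
Qed.

End Hat.

Lemma hat_derive (x : R -> V3) a b c (F G : R -> R) t0 g :
  HypX x a b -> 0 < c -> (forall t, in_I a b t -> dot (vel x t) (vel x t) < c ^ 2) ->
  (forall s, in_I a b s -> F (c * s - vc (x s) az) = G s) ->
  in_I a b t0 -> is_derive G t0 g ->
  is_derive F (c * t0 - vc (x t0) az) (g / (c - vc (vel x t0) az)).
Proof.
  intros Hx Hc Hv HFG Hs HG.
  destruct (open_I a b t0 Hs) as [r [Hr Hball]].
  destruct (vz_lt c (vel x t0) Hc (Hv t0 Hs)) as [_ Hlt].
  apply (inv_deriv (fun t => c * t - vc (x t) az) F G r t0).
  - exact Hr.
  - lra.
  - intros t Ht. apply continuity_pt_filterlim.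
    apply (@ex_derive_continuous R_AbsRing R_NormedModule (fun t => c * t - vc (x t) az)).
    exists (c - vc (vel x t) az).
    apply (xi_deriv x a b c t Hx). apply Hball; exact Ht.
  - intros t u Ht Hu Htu. apply (xi_incr x a b c Hx Hc Hv); auto.
  - intros t Ht. apply HFG. apply Hball; exact Ht.
  - exact HG.
  - apply (xi_deriv x a b c t0 Hx Hs).
Qed.

Lemma orig_derive (x : R -> V3) a b (F G : R -> R) t0 g :
  (forall s, in_I a b s -> F s = G s) -> in_I a b t0 -> is_derive G t0 g -> Derive F t0 = g.
Proof.
  intros HFG Hs HG.
  destruct (open_I a b t0 Hs) as [r [Hr Hball]].
  rewrite (Derive_ext_loc F G).
  - apply is_derive_unique; exact HG.
  - exists (mkposreal r Hr). intros s Hs'. apply HFG. apply Hball. exact Hs'.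
Qed.

Lemma id_deriv t : is_derive (fun s : R => s) t 1.
Proof. auto_derive; auto. Qed.

Lemma curve_chain (f : R -> V3 -> R) (x : R -> V3) a b t0 :
  HypX x a b -> IsC1 f -> in_I a b t0 ->
  is_derive (fun s => f s (x s)) t0
    (pd_t f t0 (x t0) * 1 + pd_x f t0 (x t0) ax * vc (vel x t0) ax
     + pd_x f t0 (x t0) ay * vc (vel x t0) ay + pd_x f t0 (x t0) az * vc (vel x t0) az).
Proof.
  intros Hx Hf Ht.
  apply (chain f (fun s => s) x t0 1); auto.
  - apply id_deriv.
  - apply (comp_deriv x a b t0 ax Hx Ht).
  - apply (comp_deriv x a b t0 ay Hx Ht).
  - apply (comp_deriv x a b t0 az Hx Ht).
Qed.

Lemma S_deriv c (x : R -> V3) a b t0 : HypX x a b -> 0 < c ->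
  (forall t, in_I a b t -> dot (vel x t) (vel x t) < c ^ 2) -> in_I a b t0 ->
  is_derive (Sf c x) t0
   (- (vc (vel x t0) ax * Derive (fun s => vc (vel x s) ax) t0
       + vc (vel x t0) ay * Derive (fun s => vc (vel x s) ay) t0
       + vc (vel x t0) az * Derive (fun s => vc (vel x s) az) t0) / (c ^ 2 * Sf c x t0)).
Proof.
  intros Hx Hc Hv Ht.
  assert (Hp : 0 < 1 - dot (vel x t0) (vel x t0) / c ^ 2).
  { assert (Hc2 : 0 < c^2) by (apply pow_lt; lra).
    assert (H1 : dot (vel x t0) (vel x t0) / c^2 < c^2 / c^2) by (apply Rmult_lt_compat_r; [apply Rinv_0_lt_compat|]; auto).
    replace (c^2/c^2) with 1 in H1 by (field; lra). lra. }
  eapply is_derive_ext; [| apply (dS_lem (fun s => vc (vel x s) ax) (fun s => vc (vel x s) ay) (fun s => vc (vel x s) az)); auto].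
  - intros s. reflexivity.
  - apply (acc_deriv x a b t0 ax Hx Ht).
  - apply (acc_deriv x a b t0 ay Hx Ht).
  - apply (acc_deriv x a b t0 az Hx Ht).
Qed.

Lemma P_deriv m c q A (x : R -> V3) a b t0 i dS0 :
  HypX x a b -> 0 < c -> (forall j, IsC1 (Aj A j)) ->
  (forall t, in_I a b t -> dot (vel x t) (vel x t) < c ^ 2) -> in_I a b t0 ->
  is_derive (Sf c x) t0 dS0 ->
  is_derive (Pf m c q A x i) t0
    (m * Derive (fun s => vc (vel x s) i) t0 / Sf c x t0 - m * vc (vel x t0) i * dS0 / (Sf c x t0 * Sf c x t0)
     + q * (pd_t (Aj A i) t0 (x t0) * 1 + pd_x (Aj A i) t0 (x t0) ax * vc (vel x t0) ax
     + pd_x (Aj A i) t0 (x t0) ay * vc (vel x t0) ay + pd_x (Aj A i) t0 (x t0) az * vc (vel x t0) az) / c).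
Proof.
  intros Hx Hc HA Hv Ht HS.
  apply (dP_lem (fun s => vc (vel x s) i) (Sf c x) (fun s => Aj A i s (x s))).
  - lra.
  - pose proof (Sf_pos c x t0 Hc (Hv t0 Ht)). lra.
  - apply (acc_deriv x a b t0 i Hx Ht).
  - exact HS.
  - apply (curve_chain (Aj A i) x a b t0 Hx (HA i) Ht).
Qed.

Lemma Gz_deriv m c q A0 A (x : R -> V3) a b t0 dS0 :
  HypX x a b -> 0 < c -> IsC1 A0 -> (forall j, IsC1 (Aj A j)) ->
  (forall t, in_I a b t -> dot (vel x t) (vel x t) < c ^ 2) -> in_I a b t0 ->
  is_derive (Sf c x) t0 dS0 ->
  is_derive (Gz m c q A0 A x) t0
    (m * c * Derive (fun s => vc (vel x s) az) t0 / Sf c x t0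
     + m * c * (c - vc (vel x t0) az) * dS0 / (Sf c x t0 * Sf c x t0)
     - q * (pd_t A0 t0 (x t0) * 1 + pd_x A0 t0 (x t0) ax * vc (vel x t0) ax
     + pd_x A0 t0 (x t0) ay * vc (vel x t0) ay + pd_x A0 t0 (x t0) az * vc (vel x t0) az)
     + q * (pd_t (Aj A az) t0 (x t0) * 1 + pd_x (Aj A az) t0 (x t0) ax * vc (vel x t0) ax
     + pd_x (Aj A az) t0 (x t0) ay * vc (vel x t0) ay + pd_x (Aj A az) t0 (x t0) az * vc (vel x t0) az)).
Proof.
  intros Hx Hc HA0 HA Hv Ht HS.
  apply (dGz_lem (fun s => vc (vel x s) az) (Sf c x) (fun s => A0 s (x s)) (fun s => Aj A az s (x s))).
  - pose proof (Sf_pos c x t0 Hc (Hv t0 Ht)). lra.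
  - apply (acc_deriv x a b t0 az Hx Ht).
  - exact HS.
  - apply (curve_chain A0 x a b t0 Hx HA0 Ht).
  - apply (curve_chain (Aj A az) x a b t0 Hx (HA az) Ht).
Qed.

Lemma Qhat_fact c (Q : Force) (x xh : R -> V3) a b s :
  HypX x a b -> 0 < c -> (forall t, in_I a b t -> dot (vel x t) (vel x t) < c ^ 2) ->
  (forall t, in_I a b t -> xh (c * t - vc (x t) az) = x t) -> in_I a b s ->
  let F := Q (x s) (vel x s) s in
  let k := 1 + vc (vel x s) az / (c - vc (vel x s) az) in
  Qhat c Q (xh (c * s - vc (x s) az)) (vel xh (c * s - vc (x s) az)) (c * s - vc (x s) az) =
  mk3 (k * vc F ax) (k * vc F ay)
      (vc F az - (vc (vel x s) ax / (c - vc (vel x s) az) * vc F ax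
                  + vc (vel x s) ay / (c - vc (vel x s) az) * vc F ay)).
Proof.
  intros Hx Hc Hv Hxh Hs F k.
  destruct (hat_facts x xh a b c s Hx Hc Hv Hxh Hs) as [Hz [Hpos [Hscal Htau]]].
  assert (HW := velxh x xh a b c s Hx Hc Hv Hxh Hs).
  unfold Qhat. cbv zeta. rewrite Hscal, Htau, (Hxh s Hs). fold F. rewrite Hz. fold k.
  rewrite HW. reflexivity.
Qed.

Lemma core_z c m q v1 v2 v3 a1 a2 a3 S dS
  T0 X0 Y0 Z0 T1 X1 Y1 Z1 T2 X2 Y2 Z2 T3 X3 Y3 Z3 :
  0 < c -> 0 < S -> 0 < c - v3 ->
  dS = - (v1 * a1 + v2 * a2 + v3 * a3) / (c ^ 2 * S) ->
  S * S = 1 - (v1 * v1 + v2 * v2 + v3 * v3) / c ^ 2 ->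
  let g0 := T0 * 1 + X0 * v1 + Y0 * v2 + Z0 * v3 in
  let g1 := T1 * 1 + X1 * v1 + Y1 * v2 + Z1 * v3 in
  let g2 := T2 * 1 + X2 * v1 + Y2 * v2 + Z2 * v3 in
  let g3 := T3 * 1 + X3 * v1 + Y3 * v2 + Z3 * v3 in
  let P1 := m * a1 / S - m * v1 * dS / (S * S) + q * g1 / c in
  let P2 := m * a2 / S - m * v2 * dS / (S * S) + q * g2 / c in
  let P3 := m * a3 / S - m * v3 * dS / (S * S) + q * g3 / c in
  let X1' := - q * (X0 - (X1 * v1 + X2 * v2 + X3 * v3) / c) in
  let X2' := - q * (Y0 - (Y1 * v1 + Y2 * v2 + Y3 * v3) / c) in
  let X3' := - q * (Z0 - (Z1 * v1 + Z2 * v2 + Z3 * v3) / c) in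
  let Gzz := m * c * a3 / S + m * c * (c - v3) * dS / (S * S) - q * g0 + q * g3 in
  let Xzz := (1 + v3 / (c - v3)) * (- q * ((T0 / c + Z0) - ((T1 / c + Z1) * v1 + (T2 / c + Z2) * v2
               + (T3 / c + Z3) * v3) / c)) in
  Gzz / (c - v3) - Xzz = (P3 - X3') - v1 / (c - v3) * (P1 - X1') - v2 / (c - v3) * (P2 - X2').
Proof.
  intros Hc HS Hv HdS HS2. intros. subst g0 g1 g2 g3 P1 P2 P3 X1' X2' X3' Gzz Xzz.
  assert (Hk : c ^ 2 - (v1 * v1 + v2 * v2 + v3 * v3) = c ^ 2 * (S * S)) by (rewrite HS2; field; lra).
  assert (Hk2 : 0 < c ^ 2 * (S * S)) by (apply Rmult_lt_0_compat; [apply pow_lt|]; nra).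
  rewrite HdS. rewrite HS2.
  field. repeat split; try lra.
Qed.

Lemma vc_mk3_ax a b d : vc (mk3 a b d) ax = a. Proof. reflexivity. Qed.
Lemma vc_mk3_ay a b d : vc (mk3 a b d) ay = b. Proof. reflexivity. Qed.
Lemma vc_mk3_az a b d : vc (mk3 a b d) az = d. Proof. reflexivity. Qed.

Theorem proposition10
  (m c q : R) (A0 : R -> V3 -> R) (A : R -> V3 -> V3) (Q : Force)
  (a b : Rbar) (x xh : R -> V3) :
  0 < m -> 0 < c ->
  IsC1 A0 -> (forall i, IsC1 (fun t X => vc (A t X) i)) ->
  (forall t, in_I a b t -> forall i,
      ex_derive (fun s => vc (x s) i) t /\
      ex_derive (fun s => vc (vel x s) i) t) ->
  (forall t, in_I a b t -> dot (vel x t) (vel x t) < c ^ 2) ->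
  (forall t, in_I a b t -> xh (c * t - vc (x t) az) = x t) ->
  ((forall t, in_I a b t -> EL (Lrel m c q A0 A) Q x t)
   <->
   (forall t, in_I a b t ->
      EL (Lhat c (Lrel m c q A0 A)) (Qhat c Q) xh (c * t - vc (x t) az))).
Proof.
  intros Hm Hc HA0 HA Hx Hv Hxh.
  assert (HAj : forall j, IsC1 (Aj A j)) by exact HA.
  assert (Hx' : HypX x a b) by exact Hx.
  assert (Key : forall t0, in_I a b t0 ->
     (EL (Lrel m c q A0 A) Q x t0 <->
      EL (Lhat c (Lrel m c q A0 A)) (Qhat c Q) xh (c * t0 - vc (x t0) az))).
  { intros t0 Ht.
    destruct (vz_lt c (vel x t0) Hc (Hv t0 Ht)) as [Hl1 Hl2].
    assert (HSp := Sf_pos c x t0 Hc (Hv t0 Ht)).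
    assert (HdS := S_deriv c x a b t0 Hx' Hc Hv Ht).
    set (dS0 := - (vc (vel x t0) ax * Derive (fun s => vc (vel x s) ax) t0
       + vc (vel x t0) ay * Derive (fun s => vc (vel x s) ay) t0
       + vc (vel x t0) az * Derive (fun s => vc (vel x s) az) t0) / (c ^ 2 * Sf c x t0)) in HdS.
    assert (HP := fun i => P_deriv m c q A x a b t0 i dS0 Hx' Hc HAj Hv Ht HdS).
    assert (HG := Gz_deriv m c q A0 A x a b t0 dS0 Hx' Hc HA0 HAj Hv Ht HdS).
    assert (Horig : forall i, Derive (fun s => pdV (Lrel m c q A0 A) (x s) (vel x s) s i) t0 =
        _ ) by (intros i; apply (orig_derive x a b _ (Pf m c q A x i) t0 _
                    (fun s Hs => orig_mom m c q A0 A x a b s i Hc Hv Hs) Ht (HP i))).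
    assert (Hhp : forall i, i <> az ->
       Derive (fun u => pdV (Lhat c (Lrel m c q A0 A)) (xh u) (vel xh u) u i) (c * t0 - vc (x t0) az) =
       c * (m * Derive (fun s => vc (vel x s) i) t0 / Sf c x t0 - m * vc (vel x t0) i * dS0 / (Sf c x t0 * Sf c x t0)
     + q * (pd_t (Aj A i) t0 (x t0) * 1 + pd_x (Aj A i) t0 (x t0) ax * vc (vel x t0) ax
     + pd_x (Aj A i) t0 (x t0) ay * vc (vel x t0) ay + pd_x (Aj A i) t0 (x t0) az * vc (vel x t0) az) / c)
       / (c - vc (vel x t0) az)).
    { intros i Hi. apply is_derive_unique.
      apply (hat_derive x a b c _ (fun s => c * Pf m c q A x i s) t0 _ Hx' Hc Hv).
      - intros s Hs. apply (hat_mom_perp m c q A0 A x xh a b s i Hx' Hc Hv Hxh Hs Hi).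
      - exact Ht.
      - apply (is_derive_scal (Pf m c q A x i)). apply HP. }
    assert (Hhz :
       Derive (fun u => pdV (Lhat c (Lrel m c q A0 A)) (xh u) (vel xh u) u az) (c * t0 - vc (x t0) az) =
       (m * c * Derive (fun s => vc (vel x s) az) t0 / Sf c x t0
     + m * c * (c - vc (vel x t0) az) * dS0 / (Sf c x t0 * Sf c x t0)
     - q * (pd_t A0 t0 (x t0) * 1 + pd_x A0 t0 (x t0) ax * vc (vel x t0) ax
     + pd_x A0 t0 (x t0) ay * vc (vel x t0) ay + pd_x A0 t0 (x t0) az * vc (vel x t0) az)
     + q * (pd_t (Aj A az) t0 (x t0) * 1 + pd_x (Aj A az) t0 (x t0) ax * vc (vel x t0) ax
     + pd_x (Aj A az) t0 (x t0) ay * vc (vel x t0) ay + pd_x (Aj A az) t0 (x t0) az * vc (vel x t0) az))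
       / (c - vc (vel x t0) az)).
    { apply is_derive_unique.
      apply (hat_derive x a b c _ (Gz m c q A0 A x) t0 _ Hx' Hc Hv).
      - intros s Hs. apply (hat_mom_z m c q A0 A x xh a b s Hx' Hc Hv Hxh Hs).
      - exact Ht.
      - exact HG. }
    assert (HQ := Qhat_fact c Q x xh a b t0 Hx' Hc Hv Hxh Ht). cbv zeta in HQ.
    assert (HS2 : Sf c x t0 * Sf c x t0 = 1 - dot (vel x t0) (vel x t0) / c ^ 2).
    { unfold Sf. apply sqrt_sqrt. pose proof (sqrt_lt_R0 (1 - dot (vel x t0) (vel x t0) / c ^ 2)).
      unfold Sf in HSp. destruct (Rle_or_lt 0 (1 - dot (vel x t0) (vel x t0) / c ^ 2)) as [|Hn]; auto.
      rewrite sqrt_neg_0 in HSp; lra. }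
    set (kap := 1 + vc (vel x t0) az / (c - vc (vel x t0) az)) in *.
    set (xi0 := c * t0 - vc (x t0) az) in *.
    assert (Ex : forall i, i <> az ->
      Derive (fun u => pdV (Lhat c (Lrel m c q A0 A)) (xh u) (vel xh u) u i) xi0
        - pdX (Lhat c (Lrel m c q A0 A)) (xh xi0) (vel xh xi0) xi0 i
        - vc (Qhat c Q (xh xi0) (vel xh xi0) xi0) i
      = kap * (Derive (fun s => pdV (Lrel m c q A0 A) (x s) (vel x s) s i) t0
        - pdX (Lrel m c q A0 A) (x t0) (vel x t0) t0 i - vc (Q (x t0) (vel x t0) t0) i)).
    { intros i Hi. rewrite (Hhp i Hi).
      unfold xi0. rewrite (hat_pdX_perp m c q A0 A x xh a b t0 i Hx' Hc HA0 HAj Hv Hxh Ht Hi).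
      fold xi0. rewrite HQ, (Horig i), (orig_pdX m c q A0 A x t0 i HA0 HAj).
      destruct i; [rewrite vc_mk3_ax| rewrite vc_mk3_ay| contradiction];
      unfold kap; field; repeat split; lra. }
    assert (Ez :
      Derive (fun u => pdV (Lhat c (Lrel m c q A0 A)) (xh u) (vel xh u) u az) xi0
        - pdX (Lhat c (Lrel m c q A0 A)) (xh xi0) (vel xh xi0) xi0 az
        - vc (Qhat c Q (xh xi0) (vel xh xi0) xi0) az
      = (Derive (fun s => pdV (Lrel m c q A0 A) (x s) (vel x s) s az) t0
        - pdX (Lrel m c q A0 A) (x t0) (vel x t0) t0 az - vc (Q (x t0) (vel x t0) t0) az)
        - vc (vel x t0) ax / (c - vc (vel x t0) az) *
          (Derive (fun s => pdV (Lrel m c q A0 A) (x s) (vel x s) s ax) t0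
           - pdX (Lrel m c q A0 A) (x t0) (vel x t0) t0 ax - vc (Q (x t0) (vel x t0) t0) ax)
        - vc (vel x t0) ay / (c - vc (vel x t0) az) *
          (Derive (fun s => pdV (Lrel m c q A0 A) (x s) (vel x s) s ay) t0
           - pdX (Lrel m c q A0 A) (x t0) (vel x t0) t0 ay - vc (Q (x t0) (vel x t0) t0) ay)).
    { rewrite Hhz.
      unfold xi0. rewrite (hat_pdX_z m c q A0 A x xh a b t0 Hx' Hc HA0 HAj Hv Hxh Ht).
      fold xi0. rewrite HQ, vc_mk3_az, (Horig ax), (Horig ay), (Horig az),
        (orig_pdX m c q A0 A x t0 ax HA0 HAj), (orig_pdX m c q A0 A x t0 ay HA0 HAj),
        (orig_pdX m c q A0 A x t0 az HA0 HAj).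
      pose proof (core_z c m q (vc (vel x t0) ax) (vc (vel x t0) ay) (vc (vel x t0) az)
        (Derive (fun s => vc (vel x s) ax) t0) (Derive (fun s => vc (vel x s) ay) t0)
        (Derive (fun s => vc (vel x s) az) t0) (Sf c x t0) dS0
        (pd_t A0 t0 (x t0)) (pd_x A0 t0 (x t0) ax) (pd_x A0 t0 (x t0) ay) (pd_x A0 t0 (x t0) az)
        (pd_t (Aj A ax) t0 (x t0)) (pd_x (Aj A ax) t0 (x t0) ax) (pd_x (Aj A ax) t0 (x t0) ay) (pd_x (Aj A ax) t0 (x t0) az)
        (pd_t (Aj A ay) t0 (x t0)) (pd_x (Aj A ay) t0 (x t0) ax) (pd_x (Aj A ay) t0 (x t0) ay) (pd_x (Aj A ay) t0 (x t0) az)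
        (pd_t (Aj A az) t0 (x t0)) (pd_x (Aj A az) t0 (x t0) ax) (pd_x (Aj A az) t0 (x t0) ay) (pd_x (Aj A az) t0 (x t0) az)
        Hc HSp ltac:(lra) eq_refl HS2) as Hcore.
      cbv zeta in Hcore. lra. }
    unfold EL.
    assert (Hk : 0 < kap).
    { unfold kap. replace (1 + vc (vel x t0) az / (c - vc (vel x t0) az)) with (c / (c - vc (vel x t0) az)) by (field; lra).
      apply Rdiv_lt_0_compat; lra. }
    split; intros H.
    - assert (E1 := H ax). assert (E2 := H ay). assert (E3 := H az).
      intros i; destruct i.
      + specialize (Ex ax ltac:(discriminate)). rewrite E1 in Ex. lra.
      + specialize (Ex ay ltac:(discriminate)). rewrite E2 in Ex. lra.
      + rewrite E1, E2, E3 in Ez. lra.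
    - assert (E1 := H ax). assert (E2 := H ay). assert (E3 := H az).
      assert (F1 := Ex ax ltac:(discriminate)). assert (F2 := Ex ay ltac:(discriminate)).
      rewrite E1 in F1. rewrite E2 in F2. rewrite E3 in Ez.
      assert (G1 : Derive (fun s => pdV (Lrel m c q A0 A) (x s) (vel x s) s ax) t0
           - pdX (Lrel m c q A0 A) (x t0) (vel x t0) t0 ax - vc (Q (x t0) (vel x t0) t0) ax = 0).
      { apply (Rmult_eq_reg_l kap); lra. }
      assert (G2 : Derive (fun s => pdV (Lrel m c q A0 A) (x s) (vel x s) s ay) t0
           - pdX (Lrel m c q A0 A) (x t0) (vel x t0) t0 ay - vc (Q (x t0) (vel x t0) t0) ay = 0).
      { apply (Rmult_eq_reg_l kap); lra. }
      rewrite G1, G2 in Ez.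
      intros i; destruct i; lra. }
  split; intros H t Ht; apply (Key t Ht); apply H; exact Ht.
Qed.
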